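(* Let $t$ be an integer with $m=2t+1\geq 11$, $n=2^m+1$ and $\delta_2=\frac{n-3}{6}$. If $x$ is an odd integer with $\delta_2+2\leq x\leq \delta_2+2^{2t-4}$, then $x$ is not a coset leader modulo $n$.
   Context: For $n=2^m+1$ and an integer $x$, the 2-cyclotomic coset of $x$ modulo $n$ is $C_x=\{x\cdot 2^{j} \bmod n : j\geq 0\}\subseteq\{0,1,\dots,n-1\}$. For $0\leq x\leq n-1$, ''$x$ is a coset leader'' means that $x$ is the smallest element of $C_x$. *)

(* Defs.v *)
From mathcomp Require Import all_boot.
Set Implicit Arguments. Unset Strict Implicit. Unset Printing Implicit Defensive.

Definition in_coset (n x y : nat) : Prop := exists j : nat, y = (x * 2 ^ j) %% n.

Definition coset_leader (n x : nat) : Prop :=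
  x < n /\ forall y, in_coset n x y -> x <= y.

(* Main.v *)
Require Import Defs.
From mathcomp Require Import all_boot.
From mathcomp Require Import zify.

Lemma stepE (n y : nat) : (n < 6 * y < 2 * n) || (4 * n < 6 * y < 5 * n) ->
  n < 3 * ((2 * y) %% n) < 2 * n.
Proof.
move=> H.
have [Hl|Hr] : (n < 6 * y < 2 * n) \/ (4 * n < 6 * y < 5 * n) by apply/orP.
  rewrite modn_small; lia.
have -> : 2 * y = 1 * n + (2 * y - n) by lia.
rewrite modnMDl modn_small; lia.
Qed.

Lemma stepM (n y : nat) : n < 3 * y < 2 * n ->
  n < 6 * ((2 * y) %% n) < 5 * n ->
  (n < 6 * ((2 * y) %% n) < 2 * n) || (4 * n < 6 * ((2 * y) %% n) < 5 * n).
Proof.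
move=> H1 H2; case: (ltnP (2 * y) n) => H.
  move: H2; rewrite modn_small //; lia.
move: H2; have -> : 2 * y = 1 * n + (2 * y - n) by lia.
rewrite modnMDl modn_small; lia.
Qed.

Lemma neg_mod (m y : nat) : 0 < y < 2 ^ m + 1 -> (y * 2 ^ m) %% (2 ^ m + 1) = 2 ^ m + 1 - y.
Proof.
move=> H.
have -> : y * 2 ^ m = (y - 1) * (2 ^ m + 1) + (2 ^ m + 1 - y) by nia.
rewrite modnMDl modn_small //; lia.
Qed.

Lemma core (m x : nat) : odd m -> 2 ^ m + 1 < 6 * x < 2 * (2 ^ m + 1) ->
  ~ coset_leader (2 ^ m + 1) x.
Proof.
move=> Hm Hx [Hxn Hl].
set n := 2 ^ m + 1 in Hx Hxn Hl.
pose y j := (x * 2 ^ j) %% n.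
have yS : forall j, y j.+1 = (2 * y j) %% n.
  move=> j; rewrite /y expnS mulnCA modnMmr //.
have ylow : forall j, x <= y j by move=> j; apply: Hl; exists j.
have npos : 0 < n by rewrite /n addn1.
have ylt : forall j, y j < n by move=> j; rewrite /y ltn_mod.
have yhigh : forall j, y j <= n - x.
  move=> j; have := ylow (j + m).
  rewrite /y expnD mulnA -modnMml neg_mod.
    rewrite -/n -/(y j) => Hq; have := ylt j; lia.
  have := ylow j; have := ylt j; rewrite -/n -/(y j); lia.
have allowed : forall j, n < 6 * y j < 5 * n.
  move=> j; have := ylow j; have := yhigh j; lia.
have inv : forall i, ((n < 6 * y (2 * i) < 2 * n) || (4 * n < 6 * y (2 * i) < 5 * n))
                     && (n < 3 * y (2 * i).+1 < 2 * n).
  elim=> [|i IH].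
    have Hy0 : y 0 = x by rewrite /y expn0 muln1 modn_small.
    have H0 : (n < 6 * y 0 < 2 * n) || (4 * n < 6 * y 0 < 5 * n).
      by rewrite Hy0; apply/orP; left; lia.
    by rewrite muln0 H0 /= yS; apply: stepE.
  move/andP: IH => [_ IH].
  have E2 : 2 * i.+1 = (2 * i).+1.+1 by lia.
  have H2 : (n < 6 * y (2 * i.+1) < 2 * n) || (4 * n < 6 * y (2 * i.+1) < 5 * n).
    rewrite E2 yS; apply: stepM => //; rewrite -yS; apply: allowed.
  by rewrite H2 /= yS; apply: stepE.
have [i Hi] : exists i, m = (2 * i).+1.
  exists m./2; rewrite -[in LHS](odd_double_half m) Hm; lia.
move/andP: (inv i) => [_ H]; rewrite -Hi in H.
have Hym : y m = n - x.
  rewrite /y neg_mod //; lia.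
move: H; rewrite Hym; lia.
Qed.

Theorem lemma3p3 (t x : nat) :
  11 <= 2 * t + 1 ->
  odd x ->
  ((2 ^ (2 * t + 1) + 1 - 3) %/ 6 + 2 <= x) ->
  (x <= (2 ^ (2 * t + 1) + 1 - 3) %/ 6 + 2 ^ (2 * t - 4)) ->
  ~ coset_leader (2 ^ (2 * t + 1) + 1) x.
Proof.
move=> Ht _ H1 H2; apply: core.
  by rewrite addn1 /= oddM.
have E : 2 ^ (2 * t + 1) = 32 * 2 ^ (2 * t - 4).
  have -> : 2 * t + 1 = 5 + (2 * t - 4) by lia.
  by rewrite expnD.
move: H1 H2; rewrite E.
set P := 2 ^ (2 * t - 4).
have : 0 < P by rewrite expn_gt0.
lia.
Qed.
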